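(* Let the branching factor satisfy $b>1$, let $\ell^*$ be the peak of the single-peaked sequence $\{\lambda_i\}$ and $\gamma>1$ a constant with $\sum_{j\ge i}\lambda_j\le\gamma\lambda_i$ for all $i\ge\ell^*+2$. Then for all $i\le\ell^*$, $\lambda_{i+1}\,x_i\le(\gamma+1)(h-i)$.
   Context: Galton–Watson branching process on an infinite $d$-ary tree (root at level $0$) with offspring distribution $D=\{c_j\}_{j=0}^d$, branching factor $b=\sum_j jc_j$; each non-root node independently holds an answer with probability $1/n$. Let $t(x)=\sum_jc_jx^j(1-\frac1n)^j$, $\phi_0=1$, $\phi_i=t(\phi_{i-1})$, $\lambda_i=\phi_{i-1}-\phi_i$. For $b>1$ the sequence $\{\lambda_i\}$ is single-peaked: there is a level $\ell^*$ with $\lambda_{i-1}\le\lambda_i$ for $i\le\ell^*$ and $\lambda_j>\lambda_{j+1}$ for $j\ge\ell^*$, and there is a constant $\gamma>1$ (independent of $n$) with $\sum_{j\ge i}\lambda_j\le\gamma\lambda_i$ for all $i\ge\ell^*+2$. For a level $h$, define $x_h=0$ and for $i\le h-1$, $x_i=\max_{i+1\le j\le h}\{x_j+\frac{j-i}{\lambda_{i+1}}\sum_{\ell=i+1}^h\lambda_\ell\}$ (the direct referral rewards of the DR mechanism). *)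

(* Defs.v *)
From HB Require Import structures.
From mathcomp Require Import all_boot all_order all_algebra.
From mathcomp Require Import all_classical all_reals all_analysis.
Set Implicit Arguments. Unset Strict Implicit. Unset Printing Implicit Defensive.
Import Order.TTheory GRing.Theory Num.Theory.
Local Open Scope ring_scope.

Section GW.
Variable R : realType.

Definition tGW (d : nat) (c : nat -> R) (n : R) (x : R) : R :=
  \sum_(0 <= j < d.+1) c j * x ^+ j * (1 - n^-1) ^+ j.

Definition branching (d : nat) (c : nat -> R) : R :=
  \sum_(0 <= j < d.+1) j%:R * c j.

Definition phiGW d c n (i : nat) : R := iter i (tGW d c n) 1.

(* lambda_i = phi_{i-1} - phi_i  (meaningful for i >= 1; lambda_0 = 0) *)
Definition lambdaGW d c n (i : nat) : R := phiGW d c n i.-1 - phiGW d c n i.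

(* Direct referral rewards: x_h = 0, and for i <= h-1,
   x_i = max_{i+1 <= j <= h} { x_j + (j-i)/lambda_{i+1} * sum_{l=i+1}^h lambda_l }.
   Computed with fuel m (fuel h suffices for all i <= h). *)
Fixpoint xDR_aux (lam : nat -> R) (h : nat) (m : nat) (i : nat) : R :=
  match m with
  | 0 => 0
  | m'.+1 =>
    if (i < h)%N then
      let S := \sum_(i.+1 <= l < h.+1) lam l in
      let T := fun j : nat => xDR_aux lam h m' j + (j%:R - i%:R) / lam i.+1 * S in
      \big[Num.max/T h]_(i.+1 <= j < h) T j
    else 0
  end.

Definition xDR (lam : nat -> R) (h i : nat) : R := xDR_aux lam h h i.

End GW.

(* Main.v *)
Require Import Defs.
From HB Require Import structures.
From mathcomp Require Import all_boot all_order all_algebra.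
From mathcomp Require Import all_classical all_reals all_analysis.
From mathcomp Require Import ring lra.
Import Order.TTheory GRing.Theory Num.Theory.
Local Open Scope ring_scope.

Lemma core (R : realType) (lam : nat -> R) (h i : nat) (a K : R) :
  0 <= a -> 0 <= K ->
  (forall j, (i <= j)%N -> (j < h)%N ->
     a * (lam j.+1)^-1 * \sum_(j.+1 <= l < h.+1) lam l <= K) ->
  forall m j, (i <= j)%N -> (j <= h)%N ->
    a * xDR_aux lam h m j <= K * (h%:R - j%:R).
Proof.
move=> a0 K0 Hst; elim=> [|m IH] j ij jh /=.
  by rewrite mulr0 mulr_ge0 // subr_ge0 ler_nat.
case: ifP => jlt; last by rewrite mulr0 mulr_ge0 // subr_ge0 ler_nat.
set S := \sum_(j.+1 <= l < h.+1) lam l.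
have HT : forall j', (j < j')%N -> (j' <= h)%N ->
   a * (xDR_aux lam h m j' + (j'%:R - j%:R) / lam j.+1 * S) <= K * (h%:R - j%:R).
  move=> j' jj' j'h.
  have h1 := IH j' (leq_trans ij (ltnW jj')) j'h.
  have h2 := Hst j ij jlt.
  have d0 : 0 <= j'%:R - j%:R :> R by rewrite subr_ge0 ler_nat ltnW.
  have -> : a * (xDR_aux lam h m j' + (j'%:R - j%:R) / lam j.+1 * S) =
     a * xDR_aux lam h m j' + (j'%:R - j%:R) * (a * (lam j.+1)^-1 * S) by ring.
  have h3 : (j'%:R - j%:R) * (a * (lam j.+1)^-1 * S) <= (j'%:R - j%:R) * K.
    by apply: ler_wpM2l.
  lra.
rewrite big_nat_cond.
apply: (big_ind (fun x => a * x <= K * (h%:R - j%:R))).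
- by apply: HT.
- move=> x y hx hy; rewrite maxEle; by case: ifP.
- move=> k /andP[/andP[k1 k2] _]; apply: HT => //; exact: ltnW.
Qed.

Section Phi.
Variables (R : realType) (d : nat) (c : nat -> R) (n : R).
Hypotheses (c0 : forall j, 0 <= c j) (c1 : \sum_(0 <= j < d.+1) c j = 1) (n1 : 1 <= n).

Let q0 : 0 <= 1 - n^-1.
Proof.
have n0 : 0 < n by apply: lt_le_trans n1.
by rewrite subr_ge0 invf_le1.
Qed.
Let q1 : 1 - n^-1 <= 1.
Proof.
have n0 : 0 <= n by apply: le_trans n1.
have : 0 <= n^-1 by rewrite invr_ge0.
move=> H; lra.
Qed.

Lemma t_mono x y : 0 <= x -> x <= y -> tGW d c n x <= tGW d c n y.
Proof.
move=> x0 xy; rewrite /tGW; apply: ler_sum => j _.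
apply: ler_wpM2r; first exact: exprn_ge0.
apply: ler_wpM2l => //; apply: lerXn2r => //; rewrite nnegrE; lra.
Qed.

Lemma t_ge0 x : 0 <= x -> 0 <= tGW d c n x.
Proof.
move=> x0; rewrite /tGW; apply: sumr_ge0 => j _.
by rewrite !mulr_ge0 // exprn_ge0.
Qed.

Lemma t_le1 x : 0 <= x -> x <= 1 -> tGW d c n x <= 1.
Proof.
move=> x0 x1; rewrite -c1 /tGW; apply: ler_sum => j _.
rewrite -mulrA; rewrite -{2}[c j]mulr1; apply: ler_wpM2l => //.
rewrite -[leRHS]mulr1; apply: ler_pM; rewrite ?exprn_ge0 //; by apply: exprn_ile1.
Qed.

Lemma phi_bounds k : 0 <= phiGW d c n k <= 1.
Proof.
elim: k => [|k /andP[h0 h1]]; rewrite /phiGW /=; first by rewrite ler01 lexx.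
by rewrite t_ge0 ?t_le1.
Qed.

Lemma phi_decr k : phiGW d c n k.+1 <= phiGW d c n k.
Proof.
elim: k => [|k IH].
  by rewrite /phiGW /=; case/andP: (phi_bounds 1).
rewrite /phiGW iterS; apply: t_mono => //.
by case/andP: (phi_bounds k.+1).
Qed.

Lemma lam_ge0 k : 0 <= lambdaGW d c n k.
Proof. rewrite /lambdaGW; case: k => [|k] /=; first by rewrite subrr.
by rewrite subr_ge0 phi_decr. Qed.

Lemma lam_le1 k : lambdaGW d c n k <= 1.
Proof. rewrite /lambdaGW; case/andP: (phi_bounds k.-1) => _ a;
 case/andP: (phi_bounds k) => b _; lra. Qed.

Lemma lam_tele m k : (m <= k)%N ->
  \sum_(m.+1 <= l < k.+1) lambdaGW d c n l = phiGW d c n m - phiGW d c n k.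
Proof.
elim: k => [|k IH].
  by rewrite leqn0 => /eqP->; rewrite big_geq // subrr.
rewrite leq_eqVlt => /orP[/eqP->|]; first by rewrite big_geq // subrr.
rewrite ltnS => mk; rewrite big_nat_recr //= IH // /lambdaGW /=; ring.
Qed.

Lemma S_le1 m k : (m <= k)%N -> \sum_(m.+1 <= l < k.+1) lambdaGW d c n l <= 1.
Proof. move=> mk; rewrite lam_tele //; case/andP: (phi_bounds m) => _ a;
 case/andP: (phi_bounds k) => b _; lra. Qed.

End Phi.

Lemma lam_mono (R : realType) (lam : nat -> R) (lstar : nat) :
  (forall i, (2 <= i <= lstar)%N -> lam i.-1 <= lam i) ->
  forall a b, (1 <= a)%N -> (a <= b)%N -> (b <= lstar)%N -> lam a <= lam b.
Proof.
move=> H a; elim=> [|b IH] a1 ab bl; first by move: a1 ab; case: a.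
move: ab; rewrite leq_eqVlt => /orP[/eqP->//|]; rewrite ltnS => ab.
apply: le_trans (IH a1 ab (ltnW bl)) _.
have := H b.+1; rewrite /= bl andbT; apply.
by apply: leq_trans a1 ab.
Qed.

Theorem proposition5p4 (R : realType) (d : nat) (c : nat -> R) (n : R)
  (lstar : nat) (gamma : R) (h : nat) :
  (forall j, 0 <= c j) ->
  \sum_(0 <= j < d.+1) c j = 1 ->
  1 <= n ->
  1 < branching d c ->
  (1 <= lstar)%N ->
  (forall i, (2 <= i <= lstar)%N -> lambdaGW d c n i.-1 <= lambdaGW d c n i) ->
  (forall j, (lstar <= j)%N -> lambdaGW d c n j.+1 < lambdaGW d c n j) ->
  1 < gamma ->
  (forall i, (lstar + 2 <= i)%N ->
     (\sum_(i <= j <oo) (lambdaGW d c n j)%:E <= (gamma * lambdaGW d c n i)%:E)%E) ->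
  forall i, (i <= lstar)%N -> (i <= h)%N ->
    lambdaGW d c n i.+1 * xDR (lambdaGW d c n) h i <= (gamma + 1) * (h%:R - i%:R).
Proof.
move=> c0 c1 n1 _ l1 Hinc Hdec g1 Htail i il ih.
have L0 := @lam_ge0 R d c n c0 c1 n1.
have L1 := @lam_le1 R d c n c0 c1 n1.
rewrite /xDR; apply: (@core R (lambdaGW d c n) h i) => //; first lra.
move=> j ij jh.
set S := \sum_(j.+1 <= l < h.+1) (lambdaGW d c n) l.
have S0 : 0 <= S by apply: sumr_ge0 => l _; apply: L0.
have S1 : S <= 1 by apply: (@S_le1 R d c n c0 c1 n1); apply: ltnW.
have a0 := L0 i.+1; have a1 := L1 i.+1.
case: (ltnP j lstar) => jl.
- have ale : (lambdaGW d c n) i.+1 <= (lambdaGW d c n) j.+1 by apply: (@lam_mono R (lambdaGW d c n) lstar Hinc i.+1 j.+1); rewrite // ltnS.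
  have [->|lpos] := eqVneq ((lambdaGW d c n) j.+1) 0.
    rewrite invr0 mulr0 mul0r; lra.
  have lp : 0 < (lambdaGW d c n) j.+1 by rewrite lt0r lpos /=; apply: L0.
  have r1 : (lambdaGW d c n) i.+1 * ((lambdaGW d c n) j.+1)^-1 <= 1 by rewrite ler_pdivrMr // mul1r.
  have r0 : 0 <= (lambdaGW d c n) i.+1 * ((lambdaGW d c n) j.+1)^-1 by rewrite mulr_ge0 // invr_ge0 ltW.
  have : (lambdaGW d c n) i.+1 * ((lambdaGW d c n) j.+1)^-1 * S <= 1 * 1 by apply: ler_pM.
  lra.
- have lp : 0 < (lambdaGW d c n) j.+1.
    by apply: le_lt_trans (L0 j.+2) (Hdec _ _); apply: leq_trans jl _.
  have Sdec : S = (lambdaGW d c n) j.+1 + \sum_(j.+2 <= l < h.+1) (lambdaGW d c n) l by rewrite /S big_ltn // ltnS.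
  have tail : \sum_(j.+2 <= l < h.+1) (lambdaGW d c n) l <= gamma * (lambdaGW d c n) j.+2.
    rewrite -lee_fin -sumEFin.
    apply: le_trans (Htail j.+2 _); last by rewrite addn2 !ltnS.
    apply: nneseries_lim_ge => k _ _; rewrite lee_fin; apply: L0.
  have dd : (lambdaGW d c n) j.+2 < (lambdaGW d c n) j.+1 by apply: Hdec; apply: leq_trans jl _.
  have Sb : S / (lambdaGW d c n) j.+1 <= gamma + 1.
    rewrite ler_pdivrMr //. have : gamma * (lambdaGW d c n) j.+2 <= gamma * (lambdaGW d c n) j.+1.
      by apply: ler_wpM2l; [lra | apply: ltW].
    lra.
  have Sb0 : 0 <= S / (lambdaGW d c n) j.+1 by rewrite mulr_ge0 // invr_ge0 ltW.
  rewrite -mulrA mulrC (mulrC _ S).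
  rewrite -[leRHS]mulr1; apply: ler_pM => //.
Qed.
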